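(* The logic $\mathsf{MGrz}\vee\mathsf{LKur}$ (the smallest extension of $\mathsf{MS4}$ containing both $\mathsf{MGrz}$ and $\mathsf{LKur}$) is not a modal companion of $\mathsf{MIPC}$.
   Context: $\mathsf{MIPC}$ is the smallest set of formulas in the bimodal language $\mathcal{L}_{\forall\exists}$ containing all theorems of $\mathsf{IPC}$; $\forall(p\wedge q)\leftrightarrow(\forall p\wedge\forall q)$, $\forall p\to p$, $\forall p\to\forall\forall p$; $\exists(p\vee q)\leftrightarrow(\exists p\vee\exists q)$, $p\to\exists p$, $\exists\exists p\to\exists p$, $(\exists p\wedge\exists q)\to\exists(\exists p\wedge q)$; $\exists\forall p\to\forall p$, $\exists p\to\forall\exists p$; closed under modus ponens, substitution and $\varphi/\forall\varphi$. $\mathsf{MS4}$ is the smallest set of formulas in the classical bimodal language $\mathcal{L}_{\Box\forall}$ containing all classical tautologies, the $\mathsf{S4}$ axioms for $\Box$, the $\mathsf{S5}$ axioms for $\forall$, and $\Box\forall p\to\forall\Box p$, closed under modus ponens, substitution, $\Box$- and $\forall$-necessitation; extensions are such sets closed under these rules. $\Diamond=\neg\Box\neg$. $\mathsf{MGrz}=\mathsf{MS4}+\Box(\Box(p\to\Box p)\to p)\to p$, $\mathsf{LKur}=\mathsf{MS4}+\Box\forall\Diamond\Box p\to\Diamond\forall p$. Gödel translation: $\bot^t=\bot$, $p^t=\Box p$, $(\varphi\wedge\psi)^t=\varphi^t\wedge\psi^t$, $(\varphi\vee\psi)^t=\varphi^t\vee\psi^t$, $(\varphi\to\psi)^t=\Box(\neg\varphi^t\vee\psi^t)$,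 $(\forall\varphi)^t=\Box\forall\varphi^t$, $(\exists\varphi)^t=\exists\varphi^t$. An extension $\mathsf{M}$ of $\mathsf{MS4}$ is a modal companion of $\mathsf{MIPC}$ if for all $\varphi$: $\mathsf{MIPC}\vdash\varphi$ iff $\mathsf{M}\vdash\varphi^t$. *)

(* Defs.v *)
Inductive iform : Type :=
| IVar : nat -> iform
| IBot : iform
| IAnd : iform -> iform -> iform
| IOr  : iform -> iform -> iform
| IImp : iform -> iform -> iform
| IAll : iform -> iform
| IEx  : iform -> iform.

Definition IIff (a b : iform) : iform := IAnd (IImp a b) (IImp b a).

Fixpoint isubst (s : nat -> iform) (f : iform) : iform :=
  match f with
  | IVar n => s n
  | IBot => IBot
  | IAnd a b => IAnd (isubst s a) (isubst s b)
  | IOr a b => IOr (isubst s a) (isubst s b)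
  | IImp a b => IImp (isubst s a) (isubst s b)
  | IAll a => IAll (isubst s a)
  | IEx a => IEx (isubst s a)
  end.

Inductive IPC_axiom : iform -> Prop :=
| ipc_k  : forall a b, IPC_axiom (IImp a (IImp b a))
| ipc_s  : forall a b c, IPC_axiom (IImp (IImp a (IImp b c)) (IImp (IImp a b) (IImp a c)))
| ipc_a1 : forall a b, IPC_axiom (IImp (IAnd a b) a)
| ipc_a2 : forall a b, IPC_axiom (IImp (IAnd a b) b)
| ipc_a3 : forall a b, IPC_axiom (IImp a (IImp b (IAnd a b)))
| ipc_o1 : forall a b, IPC_axiom (IImp a (IOr a b))
| ipc_o2 : forall a b, IPC_axiom (IImp b (IOr a b))
| ipc_o3 : forall a b c, IPC_axiom (IImp (IImp a c) (IImp (IImp b c) (IImp (IOr a b) c)))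
| ipc_efq : forall a, IPC_axiom (IImp IBot a).

Definition ip := IVar 0.
Definition iq := IVar 1.

Inductive MIPC_axiom : iform -> Prop :=
| mipc_all_and : MIPC_axiom (IIff (IAll (IAnd ip iq)) (IAnd (IAll ip) (IAll iq)))
| mipc_all_T   : MIPC_axiom (IImp (IAll ip) ip)
| mipc_all_4   : MIPC_axiom (IImp (IAll ip) (IAll (IAll ip)))
| mipc_ex_or   : MIPC_axiom (IIff (IEx (IOr ip iq)) (IOr (IEx ip) (IEx iq)))
| mipc_ex_T    : MIPC_axiom (IImp ip (IEx ip))
| mipc_ex_4    : MIPC_axiom (IImp (IEx (IEx ip)) (IEx ip))
| mipc_ex_and  : MIPC_axiom (IImp (IAnd (IEx ip) (IEx iq)) (IEx (IAnd (IEx ip) iq)))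
| mipc_exall   : MIPC_axiom (IImp (IEx (IAll ip)) (IAll ip))
| mipc_allex   : MIPC_axiom (IImp (IEx ip) (IAll (IEx ip))).

Inductive MIPC : iform -> Prop :=
| MIPC_ipc  : forall f, IPC_axiom f -> MIPC f
| MIPC_ax   : forall f, MIPC_axiom f -> MIPC f
| MIPC_mp   : forall a b, MIPC (IImp a b) -> MIPC a -> MIPC b
| MIPC_subst : forall s f, MIPC f -> MIPC (isubst s f)
| MIPC_nec  : forall f, MIPC f -> MIPC (IAll f).

Inductive mform : Type :=
| MVar : nat -> mform
| MBot : mform
| MAnd : mform -> mform -> mform
| MOr  : mform -> mform -> mform
| MImp : mform -> mform -> mform
| MBox : mform -> mform
| MAll : mform -> mform.

Definition MNot (a : mform) : mform := MImp a MBot.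
Definition MDia (a : mform) : mform := MNot (MBox (MNot a)).
Definition MEx  (a : mform) : mform := MNot (MAll (MNot a)).

Fixpoint msubst (s : nat -> mform) (f : mform) : mform :=
  match f with
  | MVar n => s n
  | MBot => MBot
  | MAnd a b => MAnd (msubst s a) (msubst s b)
  | MOr a b => MOr (msubst s a) (msubst s b)
  | MImp a b => MImp (msubst s a) (msubst s b)
  | MBox a => MBox (msubst s a)
  | MAll a => MAll (msubst s a)
  end.

Inductive CPC_axiom : mform -> Prop :=
| cpc_k  : forall a b, CPC_axiom (MImp a (MImp b a))
| cpc_s  : forall a b c, CPC_axiom (MImp (MImp a (MImp b c)) (MImp (MImp a b) (MImp a c)))
| cpc_a1 : forall a b, CPC_axiom (MImp (MAnd a b) a)
| cpc_a2 : forall a b, CPC_axiom (MImp (MAnd a b) b)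
| cpc_a3 : forall a b, CPC_axiom (MImp a (MImp b (MAnd a b)))
| cpc_o1 : forall a b, CPC_axiom (MImp a (MOr a b))
| cpc_o2 : forall a b, CPC_axiom (MImp b (MOr a b))
| cpc_o3 : forall a b c, CPC_axiom (MImp (MImp a c) (MImp (MImp b c) (MImp (MOr a b) c)))
| cpc_efq : forall a, CPC_axiom (MImp MBot a)
| cpc_dne : forall a, CPC_axiom (MImp (MNot (MNot a)) a).

Definition mp := MVar 0.
Definition mq := MVar 1.

Inductive MS4_axiom : mform -> Prop :=
| ms4_box_K : MS4_axiom (MImp (MBox (MImp mp mq)) (MImp (MBox mp) (MBox mq)))
| ms4_box_T : MS4_axiom (MImp (MBox mp) mp)
| ms4_box_4 : MS4_axiom (MImp (MBox mp) (MBox (MBox mp)))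
| ms4_all_K : MS4_axiom (MImp (MAll (MImp mp mq)) (MImp (MAll mp) (MAll mq)))
| ms4_all_T : MS4_axiom (MImp (MAll mp) mp)
| ms4_all_5 : MS4_axiom (MImp (MEx mp) (MAll (MEx mp)))
| ms4_inter : MS4_axiom (MImp (MBox (MAll mp)) (MAll (MBox mp))).

Inductive MS4plus (X : mform -> Prop) : mform -> Prop :=
| MS4_cpc   : forall f, CPC_axiom f -> MS4plus X f
| MS4_ax    : forall f, MS4_axiom f -> MS4plus X f
| MS4_extra : forall f, X f -> MS4plus X f
| MS4_mp    : forall a b, MS4plus X (MImp a b) -> MS4plus X a -> MS4plus X b
| MS4_subst : forall s f, MS4plus X f -> MS4plus X (msubst s f)
| MS4_necB  : forall f, MS4plus X f -> MS4plus X (MBox f)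
| MS4_necA  : forall f, MS4plus X f -> MS4plus X (MAll f).

Definition grz_ax : mform :=
  MImp (MBox (MImp (MBox (MImp mp (MBox mp))) mp)) mp.
Definition kur_ax : mform :=
  MImp (MBox (MAll (MDia (MBox mp)))) (MDia (MAll mp)).

Definition MGrz : mform -> Prop := MS4plus (fun f => f = grz_ax).
Definition LKur : mform -> Prop := MS4plus (fun f => f = kur_ax).
(* MGrz \/ LKur: smallest extension of MS4 containing MGrz and LKur,
   i.e. MS4 + Grz + Kur. *)
Definition MGrz_join_LKur : mform -> Prop :=
  MS4plus (fun f => f = grz_ax \/ f = kur_ax).

Fixpoint godel (f : iform) : mform :=
  match f with
  | IVar n => MBox (MVar n)
  | IBot => MBot
  | IAnd a b => MAnd (godel a) (godel b)
  | IOr a b => MOr (godel a) (godel b)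
  | IImp a b => MBox (MOr (MNot (godel a)) (godel b))
  | IAll a => MBox (MAll (godel a))
  | IEx a => MEx (godel a)
  end.

Definition modal_companion_of_MIPC (M : mform -> Prop) : Prop :=
  forall f : iform, MIPC f <-> M (godel f).

(* Main.v *)
Require Import Defs.
From Stdlib Require Import List.
Import ListNotations.

Definition Th := MGrz_join_LKur.

Inductive Pf (G : list mform) : mform -> Prop :=
| Phyp : forall a, In a G -> Pf G a
| Pth : forall a, Th a -> Pf G a
| Pmp : forall a b, Pf G (MImp a b) -> Pf G a -> Pf G b.

Lemma Pax G a : CPC_axiom a -> Pf G a.
Proof. intro H; apply Pth, MS4_cpc, H. Qed.

Lemma Th_I a : Th (MImp a a).
Proof.
  apply (MS4_mp _ (MImp a (MImp a a))).
  - apply (MS4_mp _ (MImp a (MImp (MImp a a) a))).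
    + apply MS4_cpc, cpc_s.
    + apply MS4_cpc, cpc_k.
  - apply MS4_cpc, cpc_k.
Qed.

Lemma ded G a b : Pf (a :: G) b -> Pf G (MImp a b).
Proof.
  intro H; induction H.
  - destruct H as [<-|H].
    + apply Pth, Th_I.
    + eapply Pmp; [apply Pax, cpc_k| apply Phyp, H].
  - eapply Pmp; [apply Pax, cpc_k| apply Pth, H].
  - eapply Pmp; [eapply Pmp; [apply Pax, cpc_s| exact IHPf1]| exact IHPf2].
Qed.

Lemma Pf_nil a : Pf [] a -> Th a.
Proof.
  intro H; induction H.
  - destruct H.
  - exact H.
  - eapply MS4_mp; eauto.
Qed.

Lemma Th_of a b : Pf [a] b -> Th (MImp a b).
Proof. intro H; apply Pf_nil, ded, H. Qed.
Lemma Th_of2 a b c : Pf [b; a] c -> Th (MImp a (MImp b c)).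
Proof. intro H; apply Pf_nil, ded, ded, H. Qed.

Lemma Pwk G a : Th a -> Pf G a.
Proof. apply Pth. Qed.

Lemma Papp G a b : Th (MImp a b) -> Pf G a -> Pf G b.
Proof. intros H1 H2; eapply Pmp; [apply Pth, H1|exact H2]. Qed.
Lemma Papp2 G a b c : Th (MImp a (MImp b c)) -> Pf G a -> Pf G b -> Pf G c.
Proof. intros H1 H2 H3; eapply Pmp; [eapply Pmp; [apply Pth, H1|exact H2]|exact H3]. Qed.

Lemma byc G a : Pf (MNot a :: G) MBot -> Pf G a.
Proof. intro H; eapply Pmp; [apply Pax, cpc_dne| apply ded, H]. Qed.

Lemma efq G a : Pf G MBot -> Pf G a.
Proof. intro H; eapply Pmp; [apply Pax, cpc_efq| exact H]. Qed.

Lemma or_i1 G a b : Pf G a -> Pf G (MOr a b).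
Proof. intro H; eapply Pmp; [apply Pax, cpc_o1| exact H]. Qed.
Lemma or_i2 G a b : Pf G b -> Pf G (MOr a b).
Proof. intro H; eapply Pmp; [apply Pax, cpc_o2| exact H]. Qed.
Lemma or_e G a b c : Pf G (MOr a b) -> Pf (a :: G) c -> Pf (b :: G) c -> Pf G c.
Proof.
  intros H H1 H2.
  eapply Pmp; [eapply Pmp; [eapply Pmp; [apply Pax, cpc_o3| apply ded, H1]| apply ded, H2]| exact H].
Qed.

Ltac hyp := apply Phyp; simpl; auto 20.

Definition sub2 (a b : mform) : nat -> mform :=
  fun n => match n with 0 => a | 1 => b | _ => MVar n end.

Lemma Th_K a b : Th (MImp (MBox (MImp a b)) (MImp (MBox a) (MBox b))).
Proof. exact (MS4_subst _ (sub2 a b) _ (MS4_ax _ _ ms4_box_K)). Qed.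
Lemma Th_T a : Th (MImp (MBox a) a).
Proof. exact (MS4_subst _ (sub2 a a) _ (MS4_ax _ _ ms4_box_T)). Qed.
Lemma Th_4 a : Th (MImp (MBox a) (MBox (MBox a))).
Proof. exact (MS4_subst _ (sub2 a a) _ (MS4_ax _ _ ms4_box_4)). Qed.
Lemma Th_AK a b : Th (MImp (MAll (MImp a b)) (MImp (MAll a) (MAll b))).
Proof. exact (MS4_subst _ (sub2 a b) _ (MS4_ax _ _ ms4_all_K)). Qed.

Lemma box_mono a b : Th (MImp a b) -> Th (MImp (MBox a) (MBox b)).
Proof. intro H; eapply MS4_mp; [apply Th_K| apply MS4_necB, H]. Qed.
Lemma all_mono a b : Th (MImp a b) -> Th (MImp (MAll a) (MAll b)).
Proof. intro H; eapply MS4_mp; [apply Th_AK| apply MS4_necA, H]. Qed.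
Lemma box2 a b c : Th (MImp a (MImp b c)) -> Th (MImp (MBox a) (MImp (MBox b) (MBox c))).
Proof.
  intro H; apply Th_of2.
  apply (Papp2 _ (MBox (MImp b c)) (MBox b)); [apply Th_K| |hyp].
  eapply Papp; [apply box_mono, H| hyp].
Qed.

Lemma Grz_inst a : Th (MImp (MBox (MImp (MBox (MImp a (MBox a))) a)) a).
Proof. exact (MS4_subst _ (sub2 a a) _ (MS4_extra _ _ (or_introl eq_refl))). Qed.
Lemma Kur_inst a : Th (MImp (MBox (MAll (MDia (MBox a)))) (MDia (MAll a))).
Proof. exact (MS4_subst _ (sub2 a a) _ (MS4_extra _ _ (or_intror eq_refl))). Qed.

Definition bp := MBox mp.
Definition B := MAll bp.
Definition N := MNot B.
Definition A := MBox B.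
Definition G1 := MBox (MOr (MNot (MBox (MOr (MNot bp) MBot))) MBot).
Definition P' := MBox (MAll G1).

Lemma G1_dia : Th (MImp G1 (MDia (MBox bp))).
Proof.
  apply Th_of. unfold MDia, MNot at 1. apply ded.
  eapply or_e; [eapply Papp; [apply Th_T| unfold G1; hyp]| |hyp].
  apply (Pmp _ (MBox (MOr (MNot bp) MBot))); [hyp|].
  eapply Papp; [apply box_mono| hyp].
  apply Th_of. apply or_i1. apply ded.
  apply (Pmp _ (MBox bp)); [hyp|]. eapply Papp; [apply Th_4| unfold bp; hyp].
Qed.

Lemma kurB : Th (MImp P' (MNot (MBox N))).
Proof.
  apply Th_of. eapply Papp; [apply (Kur_inst bp)|].
  eapply Papp; [apply box_mono, all_mono, G1_dia| unfold P'; hyp].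
Qed.

Lemma step2 : Th (MImp (MImp N (MBox N)) (MImp P' B)).
Proof.
  apply Th_of2. apply byc.
  eapply Pmp; [eapply Papp; [apply kurB| hyp]|].
  apply (Pmp _ N); [hyp|]. unfold N; hyp.
Qed.

Definition W := MImp (MBox (MImp N (MBox N))) N.

Lemma step6 : Th (MImp P' (MImp (MNot A) W)).
Proof.
  apply Th_of2. unfold W. apply ded. apply efq.
  apply (Pmp _ A); [hyp|].
  eapply Papp2; [apply box2, step2| hyp| ].
  eapply Papp; [apply Th_4| unfold P'; hyp].
Qed.

Lemma step6b : Th (MImp P' (MImp (MBox (MNot A)) W)).
Proof.
  apply Th_of2. eapply Papp2; [apply step6| hyp|].
  eapply Papp; [apply Th_T| hyp].
Qed.

Lemma step8 : Th (MImp P' (MImp (MBox (MNot A)) N)).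
Proof.
  apply Th_of2. eapply Papp; [apply Grz_inst|].
  eapply Papp2; [apply box2, step6b| |].
  - eapply Papp; [apply Th_4| unfold P'; hyp].
  - eapply Papp; [apply Th_4| hyp].
Qed.

Lemma main : Th (MImp P' (MNot (MBox (MNot A)))).
Proof.
  apply Th_of2.
  eapply Pmp; [eapply Papp; [apply kurB| hyp]|].
  eapply Papp2; [apply box2, step8| |].
  - eapply Papp; [apply Th_4| unfold P'; hyp].
  - eapply Papp; [apply Th_4| hyp].
Qed.

Definition G2 := MBox (MOr (MNot (MBox (MOr (MNot A) MBot))) MBot).

Lemma PG2 : Th (MImp P' G2).
Proof.
  apply Th_of. apply (Papp _ (MBox P')); [apply box_mono|].
  2:{ eapply Papp; [apply Th_4| unfold P'; hyp]. }
  apply Th_of. apply or_i1. apply ded.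
  eapply Pmp; [eapply Papp; [apply main| hyp]|].
  apply (Papp _ (MBox (MOr (MNot A) MBot))); [apply box_mono| hyp].
  apply Th_of. eapply or_e; [hyp| hyp| apply efq; hyp].
Qed.

Definition nnp := IImp (IImp ip IBot) IBot.
Definition nnAp := IImp (IImp (IAll ip) IBot) IBot.
Definition kuroda := IImp (IAll nnp) nnAp.

Lemma kuroda_M : MGrz_join_LKur (godel kuroda).
Proof.
  change (Th (MBox (MOr (MNot P') G2))).
  apply MS4_necB. apply Pf_nil. apply byc.
  apply (Pmp _ (MOr (MNot P') G2)); [hyp|]. apply or_i2.
  eapply Papp; [apply PG2|]. apply byc.
  apply (Pmp _ (MOr (MNot P') G2)); [hyp|]. apply or_i1. hyp.
Qed.

Inductive w3 := wm | wm' | wt.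
Definition R (x y : w3) : Prop :=
  match x, y with
  | wm, wm | wm', wm' | wm', wt | wt, wt => True
  | _, _ => False
  end.
Lemma Rrefl x : R x x. Proof. destruct x; simpl; auto. Qed.
Lemma Rtrans x y z : R x y -> R y z -> R x z.
Proof. destruct x, y, z; simpl; auto. Qed.

Fixpoint sat (V : nat -> w3 -> Prop) (f : iform) (x : w3) : Prop :=
  match f with
  | IVar n => forall y, R x y -> V n y
  | IBot => False
  | IAnd a b => sat V a x /\ sat V b x
  | IOr a b => sat V a x \/ sat V b x
  | IImp a b => forall y, R x y -> sat V a y -> sat V b y
  | IAll a => forall y z, R x y -> sat V a z
  | IEx a => exists z, sat V a z
  end.

Lemma pers V f x y : sat V f x -> R x y -> sat V f y.
Proof.
  revert x y; induction f; simpl; intros x y H Hr.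
  all: try (destruct H; [idtac]); eauto using Rtrans.
  all: try (destruct H; eauto; fail).
  all: try (intros y0 z Hy; apply (H y0 z); eauto using Rtrans).
Qed.

Definition valid f := forall V x, sat V f x.

Lemma sat_subst V s f x :
  sat V (isubst s f) x <-> sat (fun n y => sat V (s n) y) f x.
Proof.
  revert x; induction f; simpl; intros x.
  - split; intros H.
    + intros y Hy; eapply pers; eauto.
    + apply H, Rrefl.
  - tauto.
  - rewrite IHf1, IHf2; tauto.
  - rewrite IHf1, IHf2; tauto.
  - split; intros H y Hy; specialize (H y Hy);
      [rewrite <- IHf1, <- IHf2 | rewrite IHf1, IHf2]; exact H.
  - split; intros H y z Hy; specialize (H y z Hy); apply IHf; exact H.
  - split; intros [z Hz]; exists z; apply IHf; exact Hz.
Qed.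

Lemma sound f : MIPC f -> valid f.
Proof.
  intro H; induction H; intros V x.
  - destruct H; simpl; intros;
      repeat match goal with
      | H : _ /\ _ |- _ => destruct H end;
      eauto 10 using pers, Rtrans, Rrefl.
    all: try contradiction.
    match goal with H : _ \/ _ |- _ => destruct H end;
      [apply H0|apply H2]; eauto using Rtrans, Rrefl.
  - destruct H; simpl; intros; try split; intros;
      repeat match goal with
      | H : _ /\ _ |- _ => destruct H
      | H : exists _, _ |- _ => destruct H
      | H : _ \/ _ |- _ => destruct H end;
      eauto 6 using pers, Rtrans, Rrefl.
    all: try (split; intros y0 z Hy; edestruct H0; eauto).
  - apply (IHMIPC1 V x x (Rrefl x)), IHMIPC2.
  - apply sat_subst, IHMIPC.
  - simpl; intros; apply IHMIPC.
Qed.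

Lemma kuroda_not : ~ MIPC kuroda.
Proof.
  intro H. pose (V := fun (_ : nat) (y : w3) => y <> wm').
  pose proof (sound _ H V wm wm (Rrefl _)) as K; simpl in K.
  refine (K _ wm I _).
  - intros y z _ y1 Hy1 Hn.
    destruct z, y1; simpl in Hy1; try contradiction.
    + apply (Hn wm I). intros y2 Hy2; destruct y2; simpl in Hy2; try contradiction; unfold V; discriminate.
    + apply (Hn wt I). intros y2 Hy2; destruct y2; simpl in Hy2; try contradiction; unfold V; discriminate.
    + apply (Hn wt I). intros y2 Hy2; destruct y2; simpl in Hy2; try contradiction; unfold V; discriminate.
    + apply (Hn wt I). intros y2 Hy2; destruct y2; simpl in Hy2; try contradiction; unfold V; discriminate.
  - intros y Hy Hall. destruct y; simpl in Hy; try contradiction.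
    apply (Hall wm wm' I wm' I); reflexivity.
Qed.

Theorem proposition5p5 : ~ modal_companion_of_MIPC MGrz_join_LKur.
Proof.
  intro H. apply kuroda_not. apply (proj2 (H kuroda)). exact kuroda_M.
Qed.
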